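(* Let $\mathcal{A}$ be an $\alpha$-approximation algorithm ($\alpha\ge 1$) for the single-machine non-preemptive scheduling problem with release times and delivery times (problem $1|r_j|L_{\max}$ in the delivery-time model). Let $G$ be the dependency graph produced by the following procedure: for each semaphore $s_k$, let $\mathbf{T}_k=\{\tau_i:\sigma_i=s_k\}$; for each $\tau_i\in\mathbf{T}_k$ create a job $J_i$ with release time $r_i=C_{i,1}$, processing time $p_i=A_{i,1}$ and delivery time $q_i=C_{i,2}$; apply $\mathcal{A}$ to these jobs to obtain a non-preemptive single-machine schedule $\rho_k$; let $\pi_k$ be the order in which $\rho_k$ executes the jobs, and include the edge $(A_{i,1},A_{j,1})$ whenever $J_j$ is executed immediately after $J_i$ (not necessarily contiguously in time) in $\rho_k$; together with the edges $(C_{i,1},A_{i,1}),(A_{i,1},C_{i,2})$ for all tasks, this defines $G$. Then $len(G)\le \alpha\cdot len(G^* )$.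
   Context: Task model: a set $\mathbf{T}$ of $N$ tasks. Each task $\tau_i$ releases exactly one job at time $0$, consisting of three subjobs executed sequentially in this order: a first non-critical section of execution time $C_{i,1}\ge 0$, a critical section of execution time $A_{i,1}\ge 0$ guarded by a binary semaphore $\sigma_i\in\{s_1,\dots,s_z\}$ (each task uses exactly one semaphore), and a second non-critical section of execution time $C_{i,2}\ge 0$. Dependency graph: a dependency graph $G$ of $\mathbf{T}$ is a directed graph whose vertices are the $3N$ subjobs $C_{i,1},A_{i,1},C_{i,2}$, weighted by their execution times, containing the edges $(C_{i,1},A_{i,1})$ and $(A_{i,1},C_{i,2})$ for every $i$, and, for each semaphore $s_k$, a total order $\pi_k$ on $\mathbf{T}_k$ together with the edges $(A_{i,1},A_{j,1})$ whenever $\pi_k(\tau_i)=\pi_k(\tau_j)-1$ (no other edges). The length of a path is the sum of the weights of its vertices; $len(G)$ is the maximum length of a path in $G$. $G^*$ denotes a dependency graph minimizing $len(G)$. Delivery-time model of $1|r_j|L_{\max}$: a single machine processes jobs $J_j$ with release time $r_j\ge0$, processing time $p_j\ge 0$ and delivery time $q_j\ge 0$ non-preemptively, no job starting before its release time; if $J_j$ completes at time $c_j$, its result is delivered at $c_j+q_j$; the objective is to minimize $\max_j (c_j+q_j)$. An $\alpha$-approximation algorithm always returns a schedule whose objective is at most $\alpha$ times the optimum. *)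

(* Defs.v *)
From HB Require Import structures.
From mathcomp Require Import all_boot all_order all_algebra.
Set Implicit Arguments. Unset Strict Implicit. Unset Printing Implicit Defensive.
Import Order.TTheory GRing.Theory Num.Theory.
Local Open Scope ring_scope.

Record schedule (R : Type) (J : Type) := Schedule {
  sorder : seq J;
  sstart : J -> R }.

Section Sched.
Variables (R : realFieldType) (J : finType).

Definition feasible (r p : J -> R) (S : schedule R J) : Prop :=
  [/\ perm_eq (sorder S) (enum J),
      forall j, r j <= sstart S j &
      sorted (fun a b => sstart S a + p a <= sstart S b) (sorder S)].

Definition objective (p q : J -> R) (S : schedule R J) : R :=
  \big[Num.max/0]_(j : J) (sstart S j + p j + q j).
End Sched.

Definition algorithm (R : realFieldType) :=
  forall J : finType, (J -> R) -> (J -> R) -> (J -> R) -> schedule R J.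

Definition approx_alg (R : realFieldType) (alpha : R) (A : algorithm R) : Prop :=
  forall (J : finType) (r p q : J -> R),
    (forall j, [/\ 0 <= r j, 0 <= p j & 0 <= q j]) ->
    feasible r p (A J r p q) /\
    forall S : schedule R J, feasible r p S ->
      objective p q (A J r p q) <= alpha * objective p q S.

(* vertices: subjob (i, 0) = C_{i,1}, (i, 1) = A_{i,1}, (i, 2) = C_{i,2} *)
Definition vertex (N : nat) := ('I_N * 'I_3)%type.

Section DepGraph.
Variables (R : realFieldType) (N z : nat) (sigma : 'I_N -> 'I_z)
          (C1 A1 C2 : 'I_N -> R).

Definition tasks_of (k : 'I_z) : seq 'I_N := [seq i <- enum 'I_N | sigma i == k].

(* a family of orders pi_k is admissible iff each pi_k is a total order
   (a duplicate-free listing) of T_k *)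
Definition admissible (pi : 'I_z -> seq 'I_N) : Prop :=
  forall k, perm_eq (pi k) (tasks_of k).

Definition weight (v : vertex N) : R :=
  if (v.2 : nat) == 0%N then C1 v.1
  else if (v.2 : nat) == 1%N then A1 v.1 else C2 v.1.

Definition dep_edge (pi : 'I_z -> seq 'I_N) : rel (vertex N) :=
  fun u v =>
    ((u.1 == v.1) && ((((u.2 : nat) == 0%N) && ((v.2 : nat) == 1%N)) ||
                      (((u.2 : nat) == 1%N) && ((v.2 : nat) == 2%N))))
    || [&& (u.2 : nat) == 1%N, (v.2 : nat) == 1%N, sigma u.1 == sigma v.1 &
           infix [:: u.1; v.1] (pi (sigma u.1))].

Definition gpath (e : rel (vertex N)) (s : seq (vertex N)) : bool :=
  if s is x :: s' then path e x s' else true.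

Definition path_len (s : seq (vertex N)) : R := \sum_(v <- s) weight v.

(* len(G): maximum length of a (simple) path; dependency graphs are acyclic,
   so every path is simple, and a simple path is an ordering of its vertex set *)
Definition len (e : rel (vertex N)) : R :=
  \big[Num.max/0]_(X : {set vertex N})
     \big[Num.max/0]_(s <- permutations (enum X) | gpath e s) path_len s.

Definition alg_orders (A : algorithm R) (k : 'I_z) : seq 'I_N :=
  map val (sorder (A {i : 'I_N | sigma i == k}
                     (fun j => C1 (val j)) (fun j => A1 (val j))
                     (fun j => C2 (val j)))).
End DepGraph.

(* Main.v *)
Require Import Defs.
From HB Require Import structures.
From mathcomp Require Import all_boot all_order all_algebra.
From mathcomp Require Import lra zify.
Import Order.TTheory GRing.Theory Num.Theory.
Local Open Scope ring_scope.

Lemma infix_map_sorted (T U : eqType) (f : T -> U) (e : rel T) s x y :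
  sorted e s -> infix [:: x; y] (map f s) ->
  exists a b, [/\ f a = x, f b = y & e a b].
Proof.
elim: s => [|a s IH] //=.
move=> Hs /orP[].
  case: s Hs {IH} => [|b s] /=; first by rewrite andbF.
  move=> /andP[eab _] /andP[/eqP ea /andP[/eqP eb _]].
  by exists a, b; rewrite -ea -eb.
move=> H; apply: IH => //; exact: path_sorted Hs.
Qed.

Arguments infix_map_sorted {T U f e s x y}.

Lemma infix_nth (T : eqType) (d : T) s i : (i.+1 < size s)%N ->
  infix [:: nth d s i; nth d s i.+1] s.
Proof.
elim: s i => [|a s IH] i //=.
case: i => [|i] Hi.
  case: s Hi {IH} => [|b s] //= _; by rewrite !eqxx prefix0s.
by rewrite [nth _ (a :: s) _]/= IH ?orbT.
Qed.

Section X.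
Variables (R : realFieldType) (N z : nat) (sigma : 'I_N -> 'I_z)
          (C1 A1 C2 : 'I_N -> R).
Hypothesis Hnn : forall i, [/\ 0 <= C1 i, 0 <= A1 i & 0 <= C2 i].

Lemma len_ge (e : rel (vertex N)) s : uniq s -> gpath e s ->
  path_len C1 A1 C2 s <= len C1 A1 C2 e.
Proof.
move=> us gs; rewrite /len.
apply: (le_trans _ (le_bigmax _ _ [set x in s])).
apply: (@le_bigmax_seq _ _ _ _ _ s) => //.
rewrite mem_permutations; apply: uniq_perm => //; first exact: enum_uniq.
by move=> x; rewrite mem_enum inE.
Qed.

Lemma len_ge0 e : 0 <= len C1 A1 C2 e.
Proof. by have := @len_ge e [::] isT isT; rewrite /path_len big_nil. Qed.

Variables (alpha : R) (A : algorithm R).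
Hypothesis Happ : approx_alg alpha A.

Local Notation Jk k := {i : 'I_N | sigma i == k}.
Definition Sk k := A (Jk k) (fun j => C1 (val j)) (fun j => A1 (val j))
                     (fun j => C2 (val j)).
Definition stk k (i : 'I_N) : R :=
  if (insub i : option (Jk k)) is Some j then sstart (Sk k) j else 0.
Definition objk k := objective (fun j : Jk k => A1 (val j))
                          (fun j => C2 (val j)) (Sk k).
Definition gk k (v : vertex N) : R :=
  if (v.2 : nat) == 0%N then C1 v.1
  else if (v.2 : nat) == 1%N then stk k v.1 + A1 v.1
  else stk k v.1 + A1 v.1 + C2 v.1.

Lemma feasSk k : feasible (fun j : Jk k => C1 (val j)) (fun j => A1 (val j)) (Sk k).
Proof. by case: (@Happ (Jk k) (fun j : Jk k => C1 (val j)) (fun j => A1 (val j))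
                      (fun j => C2 (val j)) (fun j => Hnn (val j))). Qed.

Lemma stkE k (a : Jk k) : stk k (val a) = sstart (Sk k) a.
Proof. by rewrite /stk valK. Qed.

Lemma stk_ge k i : sigma i == k -> C1 i <= stk k i.
Proof.
move=> Hk; have -> : i = val (Sub i Hk : Jk k) by [].
by rewrite stkE; case: (feasSk k) => _ H _; apply: H.
Qed.

Arguments stk_ge {k i}.

Lemma gk_le k v : sigma v.1 == k -> gk k v <= objk k.
Proof.
case: v => i o /= Hk.
have Hi := stk_ge Hk; case: (Hnn i) => h1 h2 h3.
apply: (@le_trans _ _ (stk k i + A1 i + C2 i)).
  rewrite /gk /=; case: ifP => _; last case: ifP => _.
  - lra.
  - lra.
  - lra.
have -> : i = val (Sub i Hk : Jk k) by [].
by rewrite stkE; apply: (le_bigmax _ _ (Sub i Hk : Jk k)).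
Qed.

Lemma w_le k v : sigma v.1 == k -> weight C1 A1 C2 v <= gk k v.
Proof.
case: v => i o /= Hk.
have Hi := stk_ge Hk; case: (Hnn i) => h1 h2 h3.
have h0 := le_trans h1 Hi.
rewrite /weight /gk /=; case: ifP => _; [lra|case: ifP => _; lra].
Qed.

Lemma edge_le k u v acc : sigma u.1 == k ->
  dep_edge sigma (alg_orders sigma C1 A1 C2 A) u v -> acc <= gk k u ->
  sigma v.1 == k /\ acc + weight C1 A1 C2 v <= gk k v.
Proof.
case: u => i [[|[|[|a]]] ha] //; case: v => j [[|[|[|b]]] hb] //=;
  rewrite /dep_edge /= ?andbF ?orbF //=.
- move=> Hk; rewrite andbT => /eqP <- Hacc; split => //.
  have := stk_ge Hk; move: Hacc; rewrite /weight /gk /=; lra.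
- move=> Hk /andP[/eqP Hij Hinf] Hacc.
  rewrite -Hij; split => //.
  suff : stk k i + A1 i <= stk k j by move: Hacc; rewrite /weight /gk /=; lra.
  move/eqP: Hk => Hk; rewrite Hk in Hinf.
  move: Hinf; rewrite /alg_orders; case: (feasSk k) => _ _ Hs.
  move=> Hinf; case: (infix_map_sorted Hs Hinf) => a' [b' [ea eb Hab]].
  by rewrite -ea -eb !stkE.
- move=> Hk; rewrite andbT => /eqP <- Hacc; split => //.
  move: Hacc; rewrite /weight /gk /=; lra.
Qed.

Arguments edge_le {k u v acc}.
Arguments w_le {k v}.
Arguments gk_le {k v}.

Lemma path_le k s x acc : sigma x.1 == k -> acc <= gk k x ->
  path (dep_edge sigma (alg_orders sigma C1 A1 C2 A)) x s ->
  sigma (last x s).1 == k /\ acc + path_len C1 A1 C2 s <= gk k (last x s).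
Proof.
elim: s x acc => [|y s IH] x acc /= Hk Hacc.
  by rewrite /path_len big_nil addr0.
case/andP => Hxy Hp.
case: (edge_le Hk Hxy Hacc) => Hky Hy.
case: (IH y _ Hky Hy Hp) => H1 H2; split => //.
by rewrite /path_len big_cons addrA.
Qed.

Lemma alg_bound (B : R) : 0 <= B -> (forall k, objk k <= B) ->
  len C1 A1 C2 (dep_edge sigma (alg_orders sigma C1 A1 C2 A)) <= B.
Proof.
move=> HB Hk; apply: bigmax_le => // X _; apply: bigmax_le => // s gs.
case: s gs => [|x s] /= Hp; first by rewrite /path_len big_nil.
have := @path_le (sigma x.1) s x (weight C1 A1 C2 x) (eqxx _) (w_le (eqxx _)) Hp.
case=> Hl H; rewrite /path_len big_cons.
exact: le_trans H (le_trans (gk_le Hl) (Hk _)).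
Qed.
End X.

Lemma last_iota' m l : last m (iota m.+1 l) = (m + l)%N.
Proof. by elim: l m => [|l IH] m /=; [rewrite addn0 | rewrite IH addnS]. Qed.

Section Y.
Variables (R : realFieldType) (N z : nat) (sigma : 'I_N -> 'I_z)
          (C1 A1 C2 : 'I_N -> R).
Hypothesis Hnn : forall i, [/\ 0 <= C1 i, 0 <= A1 i & 0 <= C2 i].
Variables (pi : 'I_z -> seq 'I_N) (k : 'I_z) (d : 'I_N).
Hypothesis Hadm : admissible sigma pi.

Local Notation o := (pi k).
Local Notation e := (dep_edge sigma pi).
Local Notation L := (len C1 A1 C2 e).

Lemma uo : uniq o.
Proof. by rewrite (perm_uniq (Hadm k)) filter_uniq // enum_uniq. Qed.

Lemma memo x : (x \in o) = (sigma x == k).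
Proof. by rewrite (perm_mem (Hadm k)) mem_filter mem_enum andbT. Qed.

Definition v0 i : vertex N := (i, @Ordinal 3 0 isT).
Definition v1 i : vertex N := (i, @Ordinal 3 1 isT).
Definition v2 i : vertex N := (i, @Ordinal 3 2 isT).

Lemma chain l m : (m + l < size o)%N ->
  path e (v1 (nth d o m)) (map (fun t => v1 (nth d o t)) (iota m.+1 l)).
Proof.
elim: l m => [|l IH] m //= Hml.
have Hm1 : (m.+1 < size o)%N by apply: leq_ltn_trans Hml; rewrite addnS ltnS leq_addr.
rewrite IH ?addSnnS // andbT /dep_edge /=.
have Hin : forall t, (t < size o)%N -> sigma (nth d o t) == k.
  by move=> t Ht; rewrite -memo mem_nth.
rewrite (eqP (Hin m (ltnW Hm1))) (eqP (Hin m.+1 Hm1)) eqxx /=.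
by rewrite infix_nth ?orbT.
Qed.

Lemma path_ok m l : (m + l < size o)%N ->
  C1 (nth d o m) + \sum_(m <= t < m + l) A1 (nth d o t) + A1 (nth d o (m + l))
   + C2 (nth d o (m + l)) <= L.
Proof.
move=> Hml.
pose P := v0 (nth d o m) :: rcons (map (fun t => v1 (nth d o t)) (iota m l.+1))
            (v2 (nth d o (m + l))).
have HmS : (m < size o)%N by apply: leq_ltn_trans Hml; rewrite leq_addr.
have <- : path_len C1 A1 C2 P = C1 (nth d o m) + \sum_(m <= t < m + l) A1 (nth d o t)
       + A1 (nth d o (m + l)) + C2 (nth d o (m + l)).
  rewrite /path_len /P big_cons big_rcons big_map /=.
  rewrite (eq_bigr (fun j => A1 (nth d o j))) //.
  have -> : \sum_(j <- m :: iota m.+1 l) A1 (nth d o j) =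
      \sum_(m <= t < m + l) A1 (nth d o t) + A1 (nth d o (m + l)).
    rewrite -(big_nat_recr _ _ _ (leq_addr l m)) /= /index_iota subSn ?leq_addr //.
    by rewrite addKn.
  by rewrite /weight /= !addrA.
apply: len_ge.
  rewrite /P cons_uniq rcons_uniq; apply/and3P; split.
  - rewrite mem_rcons inE negb_or; apply/andP; split; first by rewrite /v0 /v2 xpair_eqE andbF.
    by apply/mapP => -[t _].
  - by apply/mapP => -[t _].
  rewrite map_inj_in_uniq ?iota_uniq // => t t' Ht Ht' [] /eqP.
  rewrite nth_uniq ?uo //; first by move/eqP.
  - by move: Ht Hml; rewrite mem_iota => /andP[_ H] H2; apply: leq_trans H _; rewrite addnS.
  - by move: Ht' Hml; rewrite mem_iota => /andP[_ H] H2; apply: leq_trans H _; rewrite addnS.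
rewrite /P /= rcons_path; apply/and3P; split.
- by rewrite /dep_edge /= eqxx.
- exact: chain.
rewrite (last_map (fun t => v1 (nth d o t))) last_iota' /dep_edge /= eqxx.
by [].
Qed.

Definition tm (n m : nat) : R := C1 (nth d o m) + \sum_(m <= t < n) A1 (nth d o t).
Definition F (n : nat) : R := \big[Num.max/0]_(m < n.+1) tm n m.

Lemma F_ge' n m : (m <= n)%N -> tm n m <= F n.
Proof. move=> Hm; exact: (le_bigmax _ _ (@Ordinal n.+1 m Hm)). Qed.

Arguments F_ge' {n m}.

Lemma F_ge n : tm n n <= F n.
Proof. exact: F_ge'. Qed.

Lemma F_ge_C1 n : C1 (nth d o n) <= F n.
Proof. by have := F_ge n; rewrite /tm big_geq // addr0. Qed.

Lemma F_step n : F n + A1 (nth d o n) <= F n.+1.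
Proof.
rewrite -lerBrDr; apply: bigmax_le => [|m _].
  have := F_ge' (leqnSn n); rewrite /tm.
  rewrite big_nat1 => H1; case: (Hnn (nth d o n)) => h1 _ _; lra.
rewrite lerBrDr.
have H := F_ge' (ltnW (ltn_ord m)).
apply: le_trans H; rewrite /tm /= (big_nat_recr _ _ _ (ltnSE (ltn_ord m))).
by rewrite addrA.
Qed.

Lemma F_obj n : (n < size o)%N -> F n + A1 (nth d o n) + C2 (nth d o n) <= L.
Proof.
move=> Hn; rewrite -addrA -lerBrDr; apply: bigmax_le => [|m _].
  have := path_ok n 0; rewrite addn0 big_geq // addr0 => /(_ Hn).
  case: (Hnn (nth d o n)) => h1 _ _; lra.
have Hm : (m <= n)%N by rewrite -ltnS.
have := path_ok m (n - m); rewrite subnKC // => /(_ Hn).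
rewrite /tm; lra.
Qed.

Lemma opt_sched : exists S : schedule R {i : 'I_N | sigma i == k},
  feasible (fun j => C1 (val j)) (fun j => A1 (val j)) S /\
  objective (fun j => A1 (val j)) (fun j => C2 (val j)) S <= L.
Proof.
pose s : seq {i : 'I_N | sigma i == k} := pmap insub o.
have Hmap : map val s = o.
  rewrite pmap_filter; last exact: insubK.
  apply/all_filterP; apply/allP => x Hx /=; by rewrite isSome_insub -memo.
have Hj : forall j : {i : 'I_N | sigma i == k}, val j \in o.
  by move=> j; rewrite memo (valP j).
exists (Schedule s (fun j => F (index (val j) o))); split; [split|] => /=.
- apply: uniq_perm; [exact: pmap_sub_uniq uo | exact: enum_uniq |].
  by move=> j; rewrite mem_pmap_sub mem_enum Hj.
- move=> j; rewrite -{1}(nth_index d (Hj j)); exact: F_ge_C1.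
- pose e' := fun x y => F (index x o) + A1 x <= F (index y o).
  have : sorted e' o.
    apply/(sortedP d) => i Hi; rewrite /e' !index_uniq ?uo // ?(ltnW Hi) //.
    exact: F_step.
  have := @sorted_map _ _ val e' s; rewrite Hmap => <-.
  by [].
- apply: bigmax_le; first exact: len_ge0.
  move=> j _ /=; have Hn : (index (val j) o < size o)%N by rewrite index_mem.
  by have := F_obj _ Hn; rewrite (nth_index d (Hj j)).
Qed.
End Y.

Theorem mainTheorem7 (R : realFieldType) (alpha : R) (A : algorithm R)
  (N z : nat) (sigma : 'I_N -> 'I_z) (C1 A1 C2 : 'I_N -> R) :
  1 <= alpha ->
  approx_alg alpha A ->
  (forall i, [/\ 0 <= C1 i, 0 <= A1 i & 0 <= C2 i]) ->
  forall pi : 'I_z -> seq 'I_N, admissible sigma pi ->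
    len C1 A1 C2 (dep_edge sigma (alg_orders sigma C1 A1 C2 A))
    <= alpha * len C1 A1 C2 (dep_edge sigma pi).
Proof.
move=> Ha Happ Hnn pi Hadm.
have Ha0 : 0 <= alpha by apply: le_trans Ha; exact: ler01.
have HL := @len_ge0 _ _ C1 A1 C2 (dep_edge sigma pi).
apply: (@alg_bound _ _ _ _ _ _ _ Hnn _ _ Happ); first exact: mulr_ge0.
move=> k; apply: bigmax_le => [|j _]; first exact: mulr_ge0.
have Hle := le_bigmax 0 (fun j => sstart (@Sk _ _ _ sigma C1 A1 C2 A k) j + A1 (val j) + C2 (val j)) j.
apply: (le_trans Hle).
case: (@opt_sched _ _ _ _ _ _ _ Hnn _ k (val j) Hadm) => S [HS HSL].
case: (Happ _ (fun j : {i : 'I_N | sigma i == k} => C1 (val j))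
          (fun j => A1 (val j)) (fun j => C2 (val j)) (fun j => Hnn (val j))) => _ H.
apply: le_trans (H S HS) _.
exact: ler_wpM2l.
Qed.
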